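(* Let $A$ and $B$ be square $\mathbb{N}$-matrices. If $A$ and $B$ are balanced strong shift equivalent, then $A$ and $B$ are unitally shift equivalent.
   Context: A rectangular $\{0,1\}$-matrix $D$ is a division matrix if every row contains at least one $1$ and every column contains exactly one $1$. For square $\mathbb{N}$-matrices $A,B$ with no zero rows, $B$ is an outsplit of $A$ if there are a division matrix $D$ and an $\mathbb{N}$-matrix $E$ with $A=DE$ and $B=ED$. $A$ and $B$ are balanced elementary strong shift equivalent if there are a division matrix $D$ and rectangular $\mathbb{N}$-matrices $R_A,R_B$ with $A=D^tR_A$, $B=D^tR_B$ and $R_AD^t=R_BD^t$. Balanced strong shift equivalence is the equivalence relation generated by balanced elementary strong shift equivalence and outsplits. Two square $\mathbb{N}$-matrices $A,B$ are shift equivalent if there are an integer $\ell\ge1$ and rectangular $\mathbb{N}$-matrices $R,S$ with $A^\ell=RS$, $B^\ell=SR$, $AR=RB$, $BS=SA$. Such a shift equivalence $(R,S)$ is unital if there are $m,k\in\mathbb{N}$ with $(B^t)^mR^t\underline{1}=(B^t)^{m+k}\underline{1}$, where $\underline1$ is the all-ones column vector. $A$ and $B$ are unitally shift equivalent if a unital shift equivalence from $A$ to $B$ exists. *)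

(* Defs.v *)
From HB Require Import structures.
From mathcomp Require Import all_boot all_order all_algebra.
From Stdlib Require Import Relations.Relation_Operators.
Set Implicit Arguments. Unset Strict Implicit. Unset Printing Implicit Defensive.
Import GRing.Theory.
Local Open Scope ring_scope.

Definition division_matrix (m n : nat) (D : 'M[nat]_(m, n)) : Prop :=
  (forall i j, D i j = 0%N \/ D i j = 1%N) /\
  (forall i, exists j, D i j = 1%N) /\
  (forall j, exists! i, D i j = 1%N).

Definition no_zero_rows (n : nat) (A : 'M[nat]_n) : Prop :=
  forall i, exists j, A i j <> 0%N.

Definition outsplit (m n : nat) (A : 'M[nat]_m) (B : 'M[nat]_n) : Prop :=
  no_zero_rows A /\ no_zero_rows B /\
  exists (D : 'M[nat]_(m, n)) (E : 'M[nat]_(n, m)),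
    division_matrix D /\ A = D *m E /\ B = E *m D.

(* balanced elementary strong shift equivalence (A and B necessarily have
   the same size, since both equal D^T times something) *)
Definition bal_elem_sse (m : nat) (A B : 'M[nat]_m) : Prop :=
  exists (k : nat) (D : 'M[nat]_(k, m)) (RA RB : 'M[nat]_(k, m)),
    division_matrix D /\ A = D^T *m RA /\ B = D^T *m RB /\
    RA *m D^T = RB *m D^T.

Definition sqmat := {n : nat & 'M[nat]_n}.

Definition bsse_step (X Y : sqmat) : Prop :=
  outsplit (projT2 X) (projT2 Y) \/
  exists (m : nat) (A B : 'M[nat]_m),
    X = existT _ m A /\ Y = existT _ m B /\ bal_elem_sse A B.

Definition bal_sse (m n : nat) (A : 'M[nat]_m) (B : 'M[nat]_n) : Prop :=
  clos_refl_sym_trans sqmat bsse_step (existT _ m A) (existT _ n B).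

Definition mxpow (n : nat) (A : 'M[nat]_n) (l : nat) : 'M[nat]_n :=
  iter l (fun M => A *m M) 1%:M.

Definition shift_equiv_via (m n : nat) (A : 'M[nat]_m) (B : 'M[nat]_n)
    (l : nat) (R : 'M[nat]_(m, n)) (S : 'M[nat]_(n, m)) : Prop :=
  (1 <= l)%N /\ mxpow A l = R *m S /\ mxpow B l = S *m R /\
  A *m R = R *m B /\ B *m S = S *m A.

Definition unitally_se (m n : nat) (A : 'M[nat]_m) (B : 'M[nat]_n) : Prop :=
  exists l (R : 'M[nat]_(m, n)) (S : 'M[nat]_(n, m)),
    shift_equiv_via A B l R S /\
    exists p k : nat,
      mxpow B^T p *m R^T *m (const_mx 1%N : 'cV[nat]_m) =
      mxpow B^T (p + k) *m (const_mx 1%N : 'cV[nat]_n).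

(* Main.v *)
Require Import Defs.
From mathcomp Require Import all_boot all_order all_algebra.
From Stdlib Require Import Relations.Relation_Operators Lia.
Set Implicit Arguments. Unset Strict Implicit. Unset Printing Implicit Defensive.
Import GRing.Theory.

Section Aux.
Local Open Scope ring_scope.

Lemma mxpowS n (A : 'M[nat]_n) l : mxpow A l.+1 = A *m mxpow A l.
Proof. by []. Qed.

Lemma mxpow0 n (A : 'M[nat]_n) : mxpow A 0 = 1%:M.
Proof. by []. Qed.

Lemma mxpow1 n (A : 'M[nat]_n) : mxpow A 1 = A.
Proof. by rewrite mxpowS mxpow0 mulmx1. Qed.

Lemma mxpowD n (A : 'M[nat]_n) a b : mxpow A (a + b) = mxpow A a *m mxpow A b.
Proof.
elim: a => [|a IH]; first by rewrite add0n mxpow0 mul1mx.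
by rewrite addSn !mxpowS IH mulmxA.
Qed.

Lemma mxpow_comm m n (A : 'M[nat]_m) (B : 'M[nat]_n) (R : 'M[nat]_(m, n)) p :
  A *m R = R *m B -> mxpow A p *m R = R *m mxpow B p.
Proof.
move=> H; elim: p => [|p IH]; first by rewrite !mxpow0 mul1mx mulmx1.
by rewrite !mxpowS -mulmxA IH mulmxA H -mulmxA.
Qed.

Lemma mxpow_comm_self n (A : 'M[nat]_n) a b :
  mxpow A a *m mxpow A b = mxpow A b *m mxpow A a.
Proof. by rewrite -!mxpowD addnC. Qed.

Lemma mxpow_tr n (A : 'M[nat]_n) p : mxpow A^T p = (mxpow A p)^T.
Proof.
elim: p => [|p IH]; first by rewrite !mxpow0 tr_scalar_mx.
rewrite !mxpowS IH -trmx_mul.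
by rewrite (mxpow_comm p (erefl (A *m A))).
Qed.

Definition uu m n (X : 'M[nat]_(m, n)) : 'cV[nat]_n := X^T *m const_mx 1%N.

Lemma uuM m n p (X : 'M[nat]_(m, n)) (Y : 'M[nat]_(n, p)) :
  uu (X *m Y) = Y^T *m uu X.
Proof. by rewrite /uu trmx_mul mulmxA. Qed.

Lemma unital_iff m n (B : 'M[nat]_n) (R : 'M[nat]_(m, n)) p k :
  mxpow B^T p *m R^T *m (const_mx 1%N : 'cV[nat]_m) =
      mxpow B^T (p + k) *m (const_mx 1%N : 'cV[nat]_n) <->
  uu (R *m mxpow B p) = uu (mxpow B (p + k)).
Proof. by rewrite /uu !mxpow_tr trmx_mul. Qed.

Lemma division_col m n (D : 'M[nat]_(m, n)) :
  division_matrix D -> uu D = const_mx 1%N.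
Proof.
move=> [H01 [_ Hc]]; apply/matrixP => j z.
rewrite /uu !mxE.
have [i [Hi Hu]] := Hc j.
rewrite (bigD1 i) //= !mxE Hi big1 ?addr0 //.
move=> i' Hi'; rewrite !mxE.
case: (H01 i' j) => [->|H1] //.
by move: Hi'; rewrite (Hu i' H1) eqxx.
Qed.

End Aux.

Local Open Scope ring_scope.

Lemma use_refl m (A : 'M[nat]_m) : unitally_se A A.
Proof.
exists 1%N, 1%:M, A; split.
  by rewrite /shift_equiv_via mxpow1 mul1mx mulmx1.
exists 0%N, 0%N; by rewrite !mxpow0 !mul1mx trmx1 mul1mx.
Qed.

Lemma use_sym m n (A : 'M[nat]_m) (B : 'M[nat]_n) :
  unitally_se A B -> unitally_se B A.
Proof.
move=> [l [R [S [[Hl [H1 [H2 [H3 H4]]]] [p [k Hu]]]]]].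
move/unital_iff: Hu => Hu.
exists (l + k)%N, (S *m mxpow A k), R; split.
  split; first by rewrite (leq_trans Hl) ?leq_addr.
  split; first by rewrite mxpowD H2 -!mulmxA -(mxpow_comm k H3).
  split; first by rewrite mxpowD H1 -!mulmxA.
  split; first by rewrite mulmxA H4 -!mulmxA; congr (_ *m _); rewrite -{1}(mxpow1 A) mxpow_comm_self mxpow1.
  by rewrite H3.
exists p, l; apply/unital_iff.
have := congr1 (fun v => S^T *m v) Hu => /=; rewrite -!uuM.
rewrite -mulmxA (mxpow_comm p H4) mulmxA -H1 -mxpowD.
rewrite (mxpow_comm _ H4) -mulmxA -mxpowD => E.
by rewrite (addnC k p) -E addnC.
Qed.

Lemma use_trans m n q (A : 'M[nat]_m) (B : 'M[nat]_n) (C : 'M[nat]_q) :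
  unitally_se A B -> unitally_se B C -> unitally_se A C.
Proof.
move=> [l1 [R1 [S1 [[Hl1 [H11 [H12 [H13 H14]]]] [p1 [k1 Hu1]]]]]].
move=> [l2 [R2 [S2 [[Hl2 [H21 [H22 [H23 H24]]]] [p2 [k2 Hu2]]]]]].
move/unital_iff: Hu1 => Hu1; move/unital_iff: Hu2 => Hu2.
exists (l1 + l2)%N, (R1 *m R2), (S2 *m S1); split.
  split; first by rewrite (leq_trans Hl1) ?leq_addr.
  split.
    by rewrite mxpowD H11 -mulmxA -(mxpow_comm l2 H14) H21 -!mulmxA.
  split.
    by rewrite addnC mxpowD H22 -mulmxA -(mxpow_comm l1 H23) H12 -!mulmxA.
  split; first by rewrite mulmxA H13 -mulmxA H23 mulmxA.
  by rewrite mulmxA H24 -mulmxA H14 mulmxA.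
exists (p1 + p2)%N, (k1 + k2)%N; apply/unital_iff.
rewrite mxpowD mulmxA -[R1 *m R2 *m _]mulmxA -(mxpow_comm p1 H23) mulmxA.
rewrite uuM uuM Hu1 -uuM -uuM (mxpow_comm _ H23) -mulmxA mxpow_comm_self mulmxA.
rewrite uuM Hu2 -uuM -!mxpowD.
have -> : (p2 + k2 + (p1 + k1) = p1 + p2 + (k1 + k2))%N by rewrite addnC addnACA.
by [].
Qed.

Lemma use_step (X Y : sqmat) : bsse_step X Y -> unitally_se (projT2 X) (projT2 Y).
Proof.
case=> [[_ [_ [D [E [HD [HA HB]]]]]] | [k [A [B [-> [-> HAB]]]]]] /=.
  exists 1%N, D, E; split.
    by rewrite /shift_equiv_via !mxpow1 HA HB !mulmxA.
  exists 0%N, 0%N; apply/unital_iff.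
  by rewrite mxpow0 mulmx1 division_col // /uu trmx1 mul1mx.
move: HAB => [k' [D [RA [RB [HD [HA [HB HC]]]]]]].
exists 2%N, B, A; split.
  have E1 : A *m A = B *m A.
    by rewrite {1}HA HB -!mulmxA; congr (_ *m _); rewrite HA !mulmxA HC.
  have E2 : B *m B = A *m B.
    by rewrite {1}HB HA -!mulmxA; congr (_ *m _); rewrite HB !mulmxA HC.
  rewrite /shift_equiv_via !mxpowS mxpow0 !mulmx1.
  by rewrite E1 E2.
exists 0%N, 1%N; apply/unital_iff.
by rewrite mxpow0 mulmx1 add0n mxpow1.
Qed.

Theorem proposition4p1 (m n : nat) (A : 'M[nat]_m) (B : 'M[nat]_n) :
  bal_sse A B -> unitally_se A B.
Proof.
move=> H.
have: forall X Y, clos_refl_sym_trans sqmat bsse_step X Y ->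
    unitally_se (projT2 X) (projT2 Y).
  move=> X Y; elim=> [x y /use_step | x | x y _ IH | x y z _ IH1 _ IH2].
  - by [].
  - exact: use_refl.
  - exact: use_sym.
  - exact: use_trans IH1 IH2.
by move=> /(_ _ _ H).
Qed.
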